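(* The generating function $$F_{(132,321)}(x,p,q,u,v,s,t)=\sum_{n\ge0}\ \sum_{\pi\in S_n(132,321)} x^n p^{\operatorname{asc}(\pi)}q^{\operatorname{des}(\pi)}u^{\operatorname{lrmax}(\pi)}v^{\operatorname{rlmax}(\pi)}s^{\operatorname{lrmin}(\pi)}t^{\operatorname{rlmin}(\pi)}$$ is equal to $\dfrac{A}{(1-ptx)(1-pux)(1-ptux)}$, where $$A=1 + s t u v x + q s^2 t u v^2 x^2 - p^3 t^2 u^2 x^3 + p^2 t u x^2 (1 + t + u + s t u v x) - p x\bigl(u + s t^2 u v x (1 + q s u (-1 + v) x) + t (1 + u + s u^2 v x)\bigr).$$
   Context: For $n\ge 0$, $S_n$ denotes the set of permutations $\pi=\pi_1\cdots\pi_n$ of $[n]=\{1,\dots,n\}$ ($S_0$ consists of the empty permutation, for which all statistics are $0$). $\pi$ avoids a pattern $\tau\in S_k$ if no subsequence $\pi_{i_1}\cdots\pi_{i_k}$ ($i_1<\dots<i_k$) satisfies $\pi_{i_a}<\pi_{i_b}\iff\tau_a<\tau_b$; $S_n(\tau,\rho)$ is the set of permutations in $S_n$ avoiding both $\tau$ and $\rho$. $\operatorname{asc}(\pi)$ (resp. $\operatorname{des}(\pi)$) is the number of $i\in[n-1]$ with $\pi_i<\pi_{i+1}$ (resp. $\pi_i>\pi_{i+1}$). $\pi_i$ is a left-to-right maximum (resp. minimum) if it is larger (resp. smaller) than every $\pi_j$ with $j<i$, and a right-to-left maximum (resp. minimum) if it is larger (resp. smaller) than every $\pi_j$ with $j>i$;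 $\operatorname{lrmax},\operatorname{lrmin},\operatorname{rlmax},\operatorname{rlmin}$ count these. *)

(* Defs.v *)
From mathcomp Require Import all_boot all_order all_fingroup all_algebra.
Set Implicit Arguments. Unset Strict Implicit. Unset Printing Implicit Defensive.
Import GRing.Theory.

Definition word n (s : {perm 'I_n}) : seq nat := [seq val (s i) | i <- enum 'I_n].

Definition asc (w : seq nat) : nat :=
  \sum_(0 <= i < (size w).-1) (nth 0 w i < nth 0 w i.+1).
Definition des (w : seq nat) : nat :=
  \sum_(0 <= i < (size w).-1) (nth 0 w i > nth 0 w i.+1).
Definition lrmax (w : seq nat) : nat :=
  \sum_(0 <= i < size w) all (fun j => nth 0 w j < nth 0 w i) (iota 0 i).
Definition lrmin (w : seq nat) : nat :=
  \sum_(0 <= i < size w) all (fun j => nth 0 w j > nth 0 w i) (iota 0 i).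
Definition rlmax (w : seq nat) : nat :=
  \sum_(0 <= i < size w) all (fun j => nth 0 w j < nth 0 w i) (iota i.+1 (size w - i.+1)).
Definition rlmin (w : seq nat) : nat :=
  \sum_(0 <= i < size w) all (fun j => nth 0 w j > nth 0 w i) (iota i.+1 (size w - i.+1)).

Definition contains n (s : {perm 'I_n}) (tau : seq nat) : bool :=
  [exists f : {ffun 'I_(size tau) -> 'I_n},
    [forall a : 'I_(size tau), forall b : 'I_(size tau),
      ((a < b)%N ==> (f a < f b)%N) &&
      ((s (f a) < s (f b))%N == (nth 0 tau a < nth 0 tau b)%N)]].
Definition avoids n (s : {perm 'I_n}) (tau : seq nat) : bool := ~~ contains s tau.

Local Open Scope ring_scope.

(* Coefficient of x^n in F_{(132,321)}. *)
Definition Fcoef (R : comNzRingType) (p q u v s t : R) (n : nat) : R :=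
  \sum_(σ : {perm 'I_n} | avoids σ [:: 1; 3; 2]%N && avoids σ [:: 3; 2; 1]%N)
    p ^+ asc (word σ) * q ^+ des (word σ) * u ^+ lrmax (word σ)
    * v ^+ rlmax (word σ) * s ^+ lrmin (word σ) * t ^+ rlmin (word σ).

Definition Anum (R : comNzRingType) (p q u v s t : R) : {poly R} :=
  let x := 'X in
  let c (a : R) := a%:P in
  1 + c (s * t * u * v) * x + c (q * s ^+ 2 * t * u * v ^+ 2) * x ^+ 2
  - c (p ^+ 3 * t ^+ 2 * u ^+ 2) * x ^+ 3
  + c (p ^+ 2 * t * u) * x ^+ 2 * (1 + c t + c u + c (s * t * u * v) * x)
  - c p * x * (c u + c (s * t ^+ 2 * u * v) * x * (1 + c (q * s * u * (-1 + v)) * x)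
               + c t * (1 + c u + c (s * u ^+ 2 * v) * x)).

(* Truncation of the geometric series 1/(1 - a x) = sum_k a^k x^k. *)
Definition geom (R : comNzRingType) (a : R) (N : nat) : {poly R} :=
  \sum_(0 <= k < N.+1) (a ^+ k)%:P * 'X ^+ k.

(* Main.v *)
Require Import Defs.
From mathcomp Require Import all_boot all_order all_fingroup all_algebra.
From mathcomp Require Import zify ring.
Import GRing.Theory.
Set Implicit Arguments. Unset Strict Implicit.


Definition o0 : 'I_3 := @Ordinal 3 0 isT.
Definition o1 : 'I_3 := @Ordinal 3 1 isT.
Definition o2 : 'I_3 := @Ordinal 3 2 isT.

Lemma c132_elim n (σ : {perm 'I_n}) : contains σ [:: 1; 3; 2]%N ->
  exists i j k : 'I_n, [/\ (i < j)%N, (j < k)%N, (σ i < σ k)%N & (σ k < σ j)%N].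
Proof.
case/existsP => f /forallP H.
move: (forallP (H o0) o1) (forallP (H o1) o2) (forallP (H o0) o2) (forallP (H o2) o1) => /=.
move=> /andP[a1 /eqP b1] /andP[a2 /eqP b2] /andP[a3 /eqP b3] /eqP b4.
exists (f o0), (f o1), (f o2); split => //; lia.
Qed.

Lemma c321_elim n (σ : {perm 'I_n}) : contains σ [:: 3; 2; 1]%N ->
  exists i j k : 'I_n, [/\ (i < j)%N, (j < k)%N, (σ j < σ i)%N & (σ k < σ j)%N].
Proof.
case/existsP => f /forallP H.
move: (forallP (H o0) o1) (forallP (H o1) o2) (forallP (H o1) o0) (forallP (H o2) o1) => /=.
move=> /andP[a1 /eqP b1] /andP[a2 /eqP b2] /eqP b3 /eqP b4.
exists (f o0), (f o1), (f o2); split => //; lia.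
Qed.

Lemma c132_intro n (σ : {perm 'I_n}) (i j k : 'I_n) :
  (i < j)%N -> (j < k)%N -> (σ i < σ k)%N -> (σ k < σ j)%N -> contains σ [:: 1; 3; 2]%N.
Proof.
move=> h1 h2 h3 h4.
apply/existsP; exists [ffun x : 'I_3 => nth i [:: i; j; k] x].
apply/forallP => a; apply/forallP => b; rewrite !ffunE.
case: a => [[|[|[|a]]] Ha] //; case: b => [[|[|[|b]]] Hb] //=;
 rewrite ?ltnn ?eqxx //; try (apply/andP; split); try (apply/eqP); lia.
Qed.

Lemma c321_intro n (σ : {perm 'I_n}) (i j k : 'I_n) :
  (i < j)%N -> (j < k)%N -> (σ j < σ i)%N -> (σ k < σ j)%N -> contains σ [:: 3; 2; 1]%N.
Proof.
move=> h1 h2 h3 h4.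
apply/existsP; exists [ffun x : 'I_3 => nth i [:: i; j; k] x].
apply/forallP => a; apply/forallP => b; rewrite !ffunE.
case: a => [[|[|[|a]]] Ha] //; case: b => [[|[|[|b]]] Hb] //=;
 rewrite ?ltnn ?eqxx //; try (apply/andP; split); try (apply/eqP); lia.
Qed.

Definition gf (m z i : nat) : nat := if i < z then m + i else if i < m + z then i - z else i.

Ltac gfcase := repeat match goal with
 | H : context [if ?b then _ else _] |- _ => let E := fresh "E" in destruct b eqn:E
 | |- context [if ?b then _ else _] => let E := fresh "E" in destruct b eqn:E end.

Lemma charac n (h : nat -> nat) :
  (forall i, i < n -> h i < n) ->
  (forall i k, i < n -> k < n -> h i = h k -> i = k) ->
  (forall v, v < n -> exists2 l, l < n & h l = v) ->
  (forall i j k, i < j -> j < k -> k < n -> h i < h k -> h k < h j -> False) ->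
  (forall i j k, i < j -> j < k -> k < n -> h j < h i -> h k < h j -> False) ->
  exists m z, m + z <= n /\ forall i, i < n -> h i = gf m z i.
Proof.
move=> Hr Hi Hs H132 H321.
case: (posnP n) => [n0|npos].
  by exists 0, 0; split; [lia | move=> i; lia].
have [z Hz hz] := Hs 0 npos.
have hne0 : forall l, l < n -> l != z -> 0 < h l.
  move=> l Hl /eqP ne; case: (posnP (h l)) => // e.
  by case: ne; apply: Hi => //; rewrite e hz.
have inc1 : forall i i', i < i' -> i' < z -> h i < h i'.
  move=> i i' ii' iz.
  have ne : h i <> h i' by move=> /Hi; lia.
  case: (ltngtP (h i) (h i')) => // hlt.
  exfalso; apply: (H321 i i' z) => //; rewrite hz; apply: hne0; lia.
have inc2 : forall k k', z <= k -> k < k' -> k' < n -> h k < h k'.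
  move=> k k' zk kk' k'n.
  have ne : h k <> h k' by move=> /Hi; lia.
  have p1 : 0 < h k' by apply: hne0; lia.
  case: (ltngtP (h k) (h k')) => // hlt.
  case: (ltngtP z k) => zk'; try lia.
    exfalso; apply: (H132 z k k') => //; rewrite hz //.
  by subst k; rewrite hz in hlt.
have inc1' : forall i i', i <= i' -> i' < z -> h i <= h i'.
  move=> i i' ii' iz; case: (ltngtP i i') => e; try lia.
    by apply/ltnW/inc1.
  by subst.
have inc2' : forall k k', z <= k -> k <= k' -> k' < n -> h k <= h k'.
  move=> k k' zk kk' k'n; case: (ltngtP k k') => e; try lia.
    by apply/ltnW/inc2.
  by subst.
case: (posnP z) => [z0|zpos].
  subst z.
  exists 0, 0; split; first lia.
  have : forall i, i < n -> h i = i.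
    elim => [|i IH] Hin; first by [].
    have hi := IH (ltnW Hin).
    have lt := inc2 i i.+1 (leq0n _) (ltnSn _) Hin.
    have hn := Hr _ Hin.
    case: (ltngtP (h i.+1) (h i).+1) => e; try lia.
    have [l Hl hl] := Hs (h i).+1 ltac:(lia).
    case: (leqP l i) => li.
      have := inc2' l i (leq0n _) li ltac:(lia); lia.
    have := inc2' i.+1 l (leq0n _) li Hl; lia.
  move=> H i Hin; rewrite H // /gf; lia.
set m := h 0.
have mpos : 0 < m by apply: hne0; lia.
have R1 : forall i, i < z -> h i = m + i.
  elim => [|i IH] Hiz; first by rewrite addn0.
  have hi := IH (ltnW Hiz).
  have lt := inc1 i i.+1 (ltnSn _) Hiz.
  have hn := Hr i.+1 ltac:(lia).
  case: (ltngtP (h i.+1) (h i).+1) => e; try lia.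
  have [l Hl hl] := Hs (h i).+1 ltac:(lia).
  case: (leqP z l) => zl.
    case: (ltngtP z l) => zl'; try lia.
      exfalso; apply: (H132 i i.+1 l) => //; try lia.
    by subst l; rewrite hz in hl.
  case: (leqP l i) => li.
    have := inc1' l i li ltac:(lia); lia.
  have := inc1' i.+1 l li zl; lia.
have R2 : forall d, z + d < n -> h (z + d) = gf m z (z + d).
  elim => [|d IH] Hd.
    rewrite addn0 hz /gf ltnn (_ : z < m + z) ?subnn //; lia.
  have hi := IH ltac:(lia).
  set i := z + d in hi Hd IH *.
  have eS : z + d.+1 = i.+1 by rewrite /i; lia.
  rewrite eS in Hd *.
  have lt := inc2 i i.+1 ltac:(lia) (ltnSn _) Hd.
  have hn := Hr _ Hd.
  rewrite /gf in hi *.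
  case: (ltnP i.+1 (m + z)) => c1.
    have hi' : h i = i - z by gfcase; lia.
    have -> : (i.+1 < z) = false by lia.
    case: (ltngtP (h i.+1) (h i).+1) => e; try lia.
    have [l Hl hl] := Hs (h i).+1 ltac:(lia).
    case: (leqP z l) => zl.
      case: (leqP l i) => li.
        have := inc2' l i zl li ltac:(lia); lia.
      have := inc2' i.+1 l ltac:(lia) li Hl; lia.
    have := R1 l zl; lia.
  have -> : (i.+1 < z) = false by lia.
  case: (ltngtP i.+1 (m + z)) => c2; try lia.
    have hi' : h i = i by gfcase; lia.
    case: (ltngtP (h i.+1) i.+1) => e; try lia.
    have [l Hl hl] := Hs i.+1 ltac:(lia).
    case: (leqP z l) => zl.
      case: (leqP l i) => li.
        have := inc2' l i zl li ltac:(lia); lia.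
      have := inc2' i.+1 l ltac:(lia) li Hl; lia.
    have := R1 l zl; lia.
  have hi' : h i = m - 1 by gfcase; lia.

  case: (ltngtP (h i.+1) (m + z)) => e; try lia.
    have l'z : h i.+1 - m < z by lia.
    have := R1 _ l'z.
    have -> : m + (h i.+1 - m) = h i.+1 by lia.
    move/(Hi (h i.+1 - m) i.+1 ltac:(lia) Hd); lia.
  have [l Hl hl] := Hs (m + z) ltac:(lia).
  case: (leqP z l) => zl.
    case: (leqP l i) => li.
      have := inc2' l i zl li ltac:(lia); lia.
    have := inc2' i.+1 l ltac:(lia) li Hl; lia.
  have := R1 l zl; lia.
have mzn : m + z <= n.
  have mn : m < n := Hr 0 npos.
  have [l Hl hl] := Hs (m - 1) ltac:(lia).
  case: (leqP z l) => zl.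
    have := R2 (l - z) ltac:(lia).
    have -> : z + (l - z) = l by lia.
    rewrite hl /gf; gfcase; lia.
  have := R1 l zl; lia.
exists m, z; split => // i Hin.
case: (ltnP i z) => iz.
  by rewrite R1 // /gf iz.
have := R2 (i - z) ltac:(lia).
by have -> : z + (i - z) = i by lia.
Qed.


Ltac gfc := unfold gf in *; gfcase; lia.

Lemma gf_no132 m z i j k : i < j -> j < k -> gf m z i < gf m z k -> gf m z k < gf m z j -> False.
Proof. intros; gfc. Qed.
Lemma gf_no321 m z i j k : i < j -> j < k -> gf m z j < gf m z i -> gf m z k < gf m z j -> False.
Proof. intros; gfc. Qed.
Lemma gf_lt n m z i : m + z <= n -> i < n -> gf m z i < n.
Proof. intros; gfc. Qed.
Lemma gf_inj m z i k : gf m z i = gf m z k -> i = k.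
Proof. intros; gfc. Qed.

Lemma nth_word n (σ : {perm 'I_n}) (i : 'I_n) : nth 0 (word σ) i = σ i.
Proof. by rewrite /word (nth_map i) ?size_enum_ord // nth_ord_enum. Qed.
Lemma size_word n (σ : {perm 'I_n}) : size (word σ) = n.
Proof. by rewrite /word size_map size_enum_ord. Qed.

Definition wd n m z := map (gf m z) (iota 0 n).
Lemma nth_wd n m z i : i < n -> nth 0 (wd n m z) i = gf m z i.
Proof. by move=> Hi; rewrite /wd (nth_map 0) ?size_iota // nth_iota. Qed.
Lemma size_wd n m z : size (wd n m z) = n.
Proof. by rewrite /wd size_map size_iota. Qed.

Lemma word_wd n (σ : {perm 'I_n}) m z : (forall i : 'I_n, val (σ i) = gf m z i) -> word σ = wd n m z.
Proof.
move=> H; apply: (@eq_from_nth _ 0); rewrite ?size_word ?size_wd // => i Hi.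
by rewrite nth_wd // -[i]/(val (Ordinal Hi)) nth_word H.
Qed.

Lemma word_inj n : injective (@word n).
Proof.
move=> s1 s2 E; apply/permP => i; apply: val_inj.
by rewrite /= -!nth_word E.
Qed.

Definition Pav n (σ : {perm 'I_n}) := avoids σ [:: 1; 3; 2] && avoids σ [:: 3; 2; 1].

Lemma avoid_char n (σ : {perm 'I_n}) : Pav σ ->
  exists m z, m + z <= n /\ forall i : 'I_n, val (σ i) = gf m z i.
Proof.
case/andP => A1 A2.
have HO : forall i (Hi : i < n), nth 0 (word σ) i = σ (Ordinal Hi).
  by move=> i Hi; rewrite -nth_word.
have [m [z [Hmz H]]] : exists m z, m + z <= n /\ forall i, i < n -> nth 0 (word σ) i = gf m z i.
  apply: charac.
  - by move=> i Hi; rewrite HO.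
  - move=> i k Hi Hk; rewrite !HO => /val_inj /perm_inj [] //.
  - move=> v Hv; exists (val ((σ^-1)%g (Ordinal Hv))) => //.
    exact: ltn_ord. by rewrite nth_word permKV.
  - move=> i j k ij jk kn.
    rewrite (HO _ (ltn_trans ij (ltn_trans jk kn))) (HO _ (ltn_trans jk kn)) (HO _ kn) => h1 h2.
    by move/negP: A1; apply; apply: (c132_intro (i:=Ordinal (ltn_trans ij (ltn_trans jk kn))) (j := Ordinal (ltn_trans jk kn)) (k := Ordinal kn)).
  - move=> i j k ij jk kn.
    rewrite (HO _ (ltn_trans ij (ltn_trans jk kn))) (HO _ (ltn_trans jk kn)) (HO _ kn) => h1 h2.
    by move/negP: A2; apply; apply: (c321_intro (i:=Ordinal (ltn_trans ij (ltn_trans jk kn))) (j := Ordinal (ltn_trans jk kn)) (k := Ordinal kn)).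
exists m, z; split => // i.
by rewrite -H // nth_word.
Qed.

Lemma gf_Pav n (σ : {perm 'I_n}) m z : (forall i : 'I_n, val (σ i) = gf m z i) -> Pav σ.
Proof.
move=> H; apply/andP; split; apply/negP.
  by case/c132_elim => i [j [k [h1 h2 h3 h4]]]; rewrite !H in h3 h4; apply: (gf_no132 h1 h2 h3 h4).
by case/c321_elim => i [j [k [h1 h2 h3 h4]]]; rewrite !H in h3 h4; apply: (gf_no321 h1 h2 h3 h4).
Qed.

Lemma gperm_ex n m z : m + z <= n -> exists σ : {perm 'I_n}, forall i : 'I_n, val (σ i) = gf m z i.
Proof.
move=> Hmz.
have inj : injective (fun i : 'I_n => Ordinal (gf_lt Hmz (ltn_ord i))).
  by move=> i k [] /gf_inj /val_inj.
by exists (perm inj) => i; rewrite permE.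
Qed.

Lemma sum2 N a b c d : a <= b -> b <= c -> c <= d ->
  \sum_(0 <= i < N) (((a <= i) && (i < b)) || ((c <= i) && (i < d)) : nat)
  = (minn N b - minn N a) + (minn N d - minn N c).
Proof.
move=> ab bc cd; elim: N => [|N IH]; first by rewrite big_geq //; lia.
rewrite big_nat_recr //= IH.
case: (leqP a N); case: (ltnP N b); case: (leqP c N); case: (ltnP N d) => /= *; lia.
Qed.

Ltac beq := apply/idP/idP => ?; gfc.


Lemma asc_wd n m z (m1 : 0 < m) (z1 : 0 < z) (mzn : m + z <= n) : asc (wd n m z) = n - 2.
Proof.
rewrite /asc size_wd.
rewrite (eq_big_nat _ _ (F2 := fun i => ((0 <= i) && (i < z.-1)) || ((z <= i) && (i < n.-1)) : nat)).
  by rewrite sum2; lia.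
move=> i Hi; rewrite !nth_wd; try lia; congr nat_of_bool; beq.
Qed.

Lemma des_wd n m z (m1 : 0 < m) (z1 : 0 < z) (mzn : m + z <= n) : des (wd n m z) = 1.
Proof.
rewrite /des size_wd.
rewrite (eq_big_nat _ _ (F2 := fun i => ((z.-1 <= i) && (i < z)) || ((z <= i) && (i < z)) : nat)).
  by rewrite sum2; lia.
move=> i Hi; rewrite !nth_wd; try lia; congr nat_of_bool; beq.
Qed.

Lemma lrmax_wd n m z (m1 : 0 < m) (z1 : 0 < z) (mzn : m + z <= n) : lrmax (wd n m z) = n - m.
Proof.
rewrite /lrmax size_wd.
rewrite (eq_big_nat _ _ (F2 := fun i => ((0 <= i) && (i < z)) || ((m + z <= i) && (i < n)) : nat)).
  by rewrite sum2; lia.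
move=> i Hi; congr nat_of_bool; apply/idP/idP.
  move/allP=> H; case: (ltnP i z) => iz /=; first lia.
  case: (leqP (m + z) i) => i2; first lia.
  have := H 0; rewrite mem_iota !nth_wd; try lia; move=> H'; have := H' ltac:(lia); gfc.
move=> hc; apply/allP => l; rewrite mem_iota => hl; rewrite !nth_wd; try lia; gfc.
Qed.

Lemma rlmax_wd n m z (m1 : 0 < m) (z1 : 0 < z) (mzn : m + z <= n) : rlmax (wd n m z) = (m + z == n).+1.
Proof.
rewrite /rlmax size_wd.
rewrite (eq_big_nat _ _ (F2 := fun i => ((z.-1 <= i) && (i < if m + z == n then z else z.-1)) || ((n.-1 <= i) && (i < n)) : nat)).
  rewrite sum2; case: (m + z =P n) => e; lia.
move=> i Hi; congr nat_of_bool; apply/idP/idP.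
  move/allP=> H.
  case: (boolP ((i == z.-1) && (m + z < n))) => [/andP [/eqP iz mz] | ne].
    have := H (m + z); rewrite mem_iota !nth_wd; try lia; move=> H'; have := H' ltac:(lia); gfc.
  case: (ltnP i n.-1) => i2; last by case: (m + z =P n); lia.
  have := H i.+1; rewrite mem_iota !nth_wd; try lia; move=> H'; have := H' ltac:(lia).
  move: ne; case: (m + z =P n); gfc.
move=> hc; apply/allP => l; rewrite mem_iota => hl; rewrite !nth_wd; try lia.
move: hc; case: (m + z =P n) => e; gfc.
Qed.

Lemma lrmin_wd n m z (m1 : 0 < m) (z1 : 0 < z) (mzn : m + z <= n) : lrmin (wd n m z) = 2.
Proof.
rewrite /lrmin size_wd.
rewrite (eq_big_nat _ _ (F2 := fun i => ((0 <= i) && (i < 1)) || ((z <= i) && (i < z.+1)) : nat)).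
  by rewrite sum2; lia.
move=> i Hi; congr nat_of_bool; apply/idP/idP.
  move/allP=> H.
  case: (ltnP i z) => iz.
    case: (posnP i) => i0 /=; first lia.
    have := H 0; rewrite mem_iota !nth_wd; try lia; move=> H'; have := H' ltac:(lia); gfc.
  case: (ltngtP i z) => iz2 /=; try lia.
  have := H z; rewrite mem_iota !nth_wd; try lia; move=> H'; have := H' ltac:(lia); gfc.
move=> hc; apply/allP => l; rewrite mem_iota => hl; rewrite !nth_wd; try lia; gfc.
Qed.

Lemma rlmin_wd n m z (m1 : 0 < m) (z1 : 0 < z) (mzn : m + z <= n) : rlmin (wd n m z) = n - z.
Proof.
rewrite /rlmin size_wd.
rewrite (eq_big_nat _ _ (F2 := fun i => ((z <= i) && (i < n)) || ((n <= i) && (i < n)) : nat)).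
  by rewrite sum2; lia.
move=> i Hi; congr nat_of_bool; apply/idP/idP.
  move/allP=> H.
  case: (ltnP i z) => iz /=; last lia.
  have := H z; rewrite mem_iota !nth_wd; try lia; move=> H'; have := H' ltac:(lia); gfc.
move=> hc; apply/allP => l; rewrite mem_iota => hl; rewrite !nth_wd; try lia; gfc.
Qed.


Lemma nth_id n i : i < n -> nth 0 (wd n 0 0) i = i.
Proof. by move=> Hi; rewrite nth_wd //. Qed.

Lemma asc_id n : asc (wd n 0 0) = n.-1.
Proof.
rewrite /asc size_wd.
rewrite (eq_big_nat _ _ (F2 := fun i => ((0 <= i) && (i < n.-1)) || ((n <= i) && (i < n)) : nat)).
  by rewrite sum2; lia.
move=> i Hi; rewrite !nth_id; try lia; congr nat_of_bool; apply/idP/idP => ?; lia.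
Qed.
Lemma des_id n : des (wd n 0 0) = 0.
Proof.
rewrite /des size_wd.
rewrite (eq_big_nat _ _ (F2 := fun i => ((0 <= i) && (i < 0)) || ((0 <= i) && (i < 0)) : nat)).
  by rewrite sum2; lia.
move=> i Hi; rewrite !nth_id; try lia; congr nat_of_bool; apply/idP/idP => ?; lia.
Qed.
Lemma lrmax_id n : lrmax (wd n 0 0) = n.
Proof.
rewrite /lrmax size_wd.
rewrite (eq_big_nat _ _ (F2 := fun i => ((0 <= i) && (i < n)) || ((n <= i) && (i < n)) : nat)).
  by rewrite sum2; lia.
move=> i Hi; congr nat_of_bool; apply/idP/idP => _; first lia.
apply/allP => l; rewrite mem_iota => hl; rewrite !nth_id; lia.
Qed.
Lemma rlmin_id n : rlmin (wd n 0 0) = n.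
Proof.
rewrite /rlmin size_wd.
rewrite (eq_big_nat _ _ (F2 := fun i => ((0 <= i) && (i < n)) || ((n <= i) && (i < n)) : nat)).
  by rewrite sum2; lia.
move=> i Hi; congr nat_of_bool; apply/idP/idP => _; first lia.
apply/allP => l; rewrite mem_iota => hl; rewrite !nth_id; lia.
Qed.
Lemma rlmax_id n : rlmax (wd n 0 0) = (0 < n).
Proof.
rewrite /rlmax size_wd.
rewrite (eq_big_nat _ _ (F2 := fun i => ((n.-1 <= i) && (i < n)) || ((n <= i) && (i < n)) : nat)).
  by rewrite sum2; case: (posnP n) => e; lia.
move=> i Hi; congr nat_of_bool; apply/idP/idP.
  move/allP => H; case: (ltnP i n.-1) => i2 /=; last lia.
  have := H i.+1; rewrite mem_iota !nth_id; try lia; move=> H'; have := H' ltac:(lia); lia.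
move=> hc; apply/allP => l; rewrite mem_iota => hl; rewrite !nth_id; lia.
Qed.
Lemma lrmin_id n : lrmin (wd n 0 0) = (0 < n).
Proof.
rewrite /lrmin size_wd.
rewrite (eq_big_nat _ _ (F2 := fun i => ((0 <= i) && (i < 1)) || ((n.+1 <= i) && (i < n.+1)) : nat)).
  by rewrite sum2; case: (posnP n) => e; lia.
move=> i Hi; congr nat_of_bool; apply/idP/idP.
  move/allP => H; case: (posnP i) => i2 /=; first lia.
  have := H 0; rewrite mem_iota !nth_id; try lia; move=> H'; have := H' ltac:(lia); lia.
move=> hc; apply/allP => l; rewrite mem_iota => hl; rewrite !nth_id; lia.
Qed.


Definition Wl n := wd n 0 0 :: [seq wd n a.+1 b.+1 | a <- iota 0 n.-1, b <- iota 0 (n.-1 - a)].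

Lemma wd_00 n m z : (m == 0) || (z == 0) -> wd n m z = wd n 0 0.
Proof. move=> h; rewrite /wd; apply: eq_map => i; gfc. Qed.

Lemma Wl_uniq n : uniq (Wl n).
Proof.
rewrite /Wl cons_uniq; apply/andP; split.
  apply/negP => /allpairsPdep [a [b [ha hb e]]].
  move: ha hb; rewrite !mem_iota => ha hb.
  have := congr1 (nth 0 ^~ 0) e; rewrite !nth_wd; try lia; gfc.
apply: allpairs_uniq_dep; first exact: iota_uniq.
  by move=> a _; exact: iota_uniq.
move=> x1 x2 /allpairsPdep [a1 [b1 [h1 h1' ->]]] /allpairsPdep [a2 [b2 [h2 h2' ->]]] /= e.
move: h1 h1' h2 h2'; rewrite !mem_iota => h1 h1' h2 h2'.
have e0 := congr1 (nth 0 ^~ 0) e; have e1 := congr1 (nth 0 ^~ b1.+1) e.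
move: e0 e1 => /=; rewrite !nth_wd; try lia.
move=> e0 e1; have [-> ->] : a1 = a2 /\ b1 = b2 by gfc.
by [].
Qed.

Lemma Fcoef_W (R : comNzRingType) (p q u v s t : R) n :
  Fcoef p q u v s t n = (\sum_(w <- Wl n) p ^+ asc w * q ^+ des w * u ^+ lrmax w
    * v ^+ rlmax w * s ^+ lrmin w * t ^+ rlmin w)%R.
Proof.
set Fw := fun w => (p ^+ asc w * q ^+ des w * u ^+ lrmax w
    * v ^+ rlmax w * s ^+ lrmin w * t ^+ rlmin w)%R.
have -> : Fcoef p q u v s t n = (\sum_(w <- map (@word n) [seq σ <- index_enum {perm 'I_n} | Pav σ]) Fw w)%R.
  by rewrite big_map big_filter.
apply: perm_big; apply: uniq_perm.
- rewrite map_inj_uniq; [exact: filter_uniq (index_enum_uniq _) | exact: word_inj].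
- exact: Wl_uniq.
move=> w; apply/idP/idP.
  case/mapP => σ; rewrite mem_filter => /andP [Hp _] ->.
  have [m [z [Hmz H]]] := avoid_char Hp.
  rewrite (word_wd H) /Wl in_cons.
  case: (boolP ((m == 0) || (z == 0))) => h0.
    by rewrite wd_00 // eqxx.
  apply/orP; right; apply/allpairsPdep; exists m.-1, z.-1; rewrite !mem_iota; split; try lia.
  by congr wd; lia.
rewrite /Wl in_cons => /orP [/eqP -> | /allpairsPdep [a [b [ha hb ->]]]].
  have [σ Hσ] := gperm_ex (n := n) (m := 0) (z := 0) ltac:(lia).
  apply/mapP; exists σ; last by rewrite (word_wd Hσ).
  by rewrite mem_filter (gf_Pav Hσ) mem_index_enum.
move: ha hb; rewrite !mem_iota => ha hb.
have [σ Hσ] := gperm_ex (n := n) (m := a.+1) (z := b.+1) ltac:(lia).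
apply/mapP; exists σ; last by rewrite (word_wd Hσ).
by rewrite mem_filter (gf_Pav Hσ) mem_index_enum.
Qed.

Local Open Scope ring_scope.

Lemma alg_core (K : comNzRingType) (X Y Ga Gb Gg a b g ea eb eg c1 c2 w v A : K) :
  (1 - a*X)*Ga = 1 - ea*Y -> (1 - b*X)*Gb = 1 - eb*Y -> (1 - g*X)*Gg = 1 - eg*Y ->
  A = (1-a*X)*(1-b*X)*(1-g*X) + c1*X*(1-a*X)*(1-b*X) + c2*X^+2*(w*(1-g*X) + v) ->
  exists H, (1 + c1*(X*Gg) + c2*(X^+2*(Ga*(Gb*(w + v*Gg))))) - A*Ga*Gb*Gg = Y*H.
Proof.
move=> ha hb hg hA.
set E := (1 + _ + _).
set D := (1-a*X)*(1-b*X)*(1-g*X).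
set K1 := -(ea+eb+eg) + Y*(ea*eb+ea*eg+eb*eg) - Y^+2*(ea*eb*eg).
have hDG : D*Ga*Gb*Gg = 1 + Y*K1.
  transitivity (((1-a*X)*Ga)*((1-b*X)*Gb)*((1-g*X)*Gg)); first by rewrite /D; ring.
  rewrite ha hb hg /K1; ring.
set H1 := - c1*X*(1-a*X)*(1-b*X)*eg + c2*X^+2*(w*(1-g*X)*(ea*eb*Y - ea - eb)
      + v*(-(ea+eb+eg) + (ea*eb + ea*eg + eb*eg)*Y - ea*eb*eg*Y^+2)).
have hED : E*D = A + Y*H1.
  transitivity (D + c1*X*(1-a*X)*(1-b*X)*((1-g*X)*Gg) + c2*X^+2*(w*(1-g*X)*((1-a*X)*Ga)*((1-b*X)*Gb) + v*((1-a*X)*Ga)*((1-b*X)*Gb)*((1-g*X)*Gg))).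
    by rewrite /E /D; ring.
  rewrite ha hb hg hA /H1 /D; ring.
exists (H1*Ga*Gb*Gg - E*K1).
have -> : A = E*D - Y*H1 by rewrite hED; ring.
transitivity (E - E*(D*Ga*Gb*Gg) + Y*H1*Ga*Gb*Gg); first ring.
rewrite hDG; ring.
Qed.

Lemma geom_tel (R : comNzRingType) (a : R) N :
  (1 - a%:P * 'X) * geom a N = 1 - (a ^+ N.+1)%:P * 'X^(N.+1).
Proof.
elim: N => [|N IH].
  rewrite /geom big_nat1 expr0 expr1 !expr0 mulr1. ring.
rewrite /geom big_nat_recr //= mulrDr -/(geom a N) IH.
rewrite !exprS. ring.
Qed.

Lemma coef_geom (R : comNzRingType) (a : R) N i :
  (geom a N)`_i = if (i < N.+1)%N then a ^+ i else 0.
Proof.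
have -> : geom a N = \poly_(k < N.+1) a ^+ k.
  rewrite poly_def /geom big_mkord; apply: eq_bigr => k _; by rewrite mul_polyC.
by rewrite coef_poly.
Qed.

Lemma keyA (R : comNzRingType) (p q u v s t : R) :
  Anum p q u v s t = (1 - (p*t)%:P * 'X) * (1 - (p*u)%:P * 'X) * (1 - (p*t*u)%:P * 'X)
   + (s*t*u*v)%:P * 'X * (1 - (p*t)%:P * 'X) * (1 - (p*u)%:P * 'X)
   + (q * s^+2 * t * u)%:P * 'X^2 * ((v^+2 - v)%:P * (1 - (p*t*u)%:P * 'X) + v%:P).
Proof. rewrite /Anum /=. ring. Qed.

Definition Epoly (R : comNzRingType) (p q u v s t : R) n : {poly R} :=
  1 + (s*t*u*v)%:P * ('X * geom (p*t*u) n)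
  + (q*s^+2*t*u)%:P * ('X^2 * (geom (p*t) n * (geom (p*u) n
       * ((v^+2 - v)%:P + v%:P * geom (p*t*u) n)))).

Lemma E_eq (R : comNzRingType) (p q u v s t : R) n :
  (Anum p q u v s t * geom (p * t) n * geom (p * u) n * geom (p * t * u) n)`_n
  = (Epoly p q u v s t n)`_n.
Proof.
have [H hH] := alg_core (geom_tel (p*t) n) (geom_tel (p*u) n) (geom_tel (p*t*u) n) (keyA p q u v s t).
have := congr1 (fun P : {poly R} => P`_n) hH.
rewrite /= coefB coefXnM ltnSn => /eqP; rewrite subr_eq0 => /eqP <-.
by [].
Qed.

Lemma sum_iota (R : comNzRingType) N (F : nat -> R) : \sum_(a <- iota 0 N) F a = \sum_(a < N) F a.
Proof. by rewrite -(big_mkord xpredT) /index_iota subn0. Qed.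

Theorem theorem5 (R : comNzRingType) (p q u v s t : R) (n : nat) :
  Fcoef p q u v s t n =
  (Anum p q u v s t * geom (p * t) n * geom (p * u) n * geom (p * t * u) n)`_n.
Proof.
rewrite E_eq Fcoef_W /Wl big_cons big_allpairs_dep sum_iota.
rewrite asc_id des_id lrmax_id rlmax_id lrmin_id rlmin_id.
rewrite /Epoly !coefD coefC coefCM coefXM coefCM coefXnM.
case: n => [|[|k]].
- rewrite big_ord0 /= !expr0 !mulr0 !addr0 !mulr1; by [].
- rewrite big_ord0 coef_geom /= !expr0 !expr1 !mulr0 !addr0 !mulr1 add0r. ring.
rewrite /= coef_geom /=.
have hC : forall i, (i < k.+3)%N -> ((v ^+ 2 - v)%:P + v%:P * geom (p * t * u) k.+2)`_i
   = (v^+2 - v) * (i == 0%N)%:R + v * (p*t*u)^+i.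
  move=> i hi; rewrite coefD coefC coefCM coef_geom hi.
  by case: (i == 0%N); rewrite ?mulr1 ?mulr0.
set Gg := geom (p * t * u) k.+2 in hC *.
rewrite (_ : (k.+1 < k.+3)%N = true); last lia.
rewrite (_ : (k.+2 - 2)%N = k); last lia.
rewrite coefM mulr_sumr add0r.
congr (_ + _); first by rewrite !exprMn !exprS !expr0; ring.
apply: eq_bigr => a _.
have ak : (a <= k)%N by have := ltn_ord a; lia.
rewrite coef_geom (_ : (a < k.+3)%N = true); last lia.
rewrite coefM mulr_sumr mulr_sumr subSn // sum_iota.
apply: eq_bigr => b _.
have bk : (b <= k - a)%N by have := ltn_ord b; lia.
have Hb : (a.+1 + b.+1 <= k.+2)%N by lia.
rewrite (asc_wd (ltn0Sn a) (ltn0Sn b) Hb) (des_wd (ltn0Sn a) (ltn0Sn b) Hb).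
rewrite (lrmax_wd (ltn0Sn a) (ltn0Sn b) Hb) (rlmax_wd (ltn0Sn a) (ltn0Sn b) Hb).
rewrite (lrmin_wd (ltn0Sn a) (ltn0Sn b) Hb) (rlmin_wd (ltn0Sn a) (ltn0Sn b) Hb).
rewrite coef_geom (_ : (b < k.+3)%N = true); last lia.
rewrite hC; last lia.
have [r hr] : exists r, k = (a + b + r)%N by exists (k - a - b)%N; lia.
rewrite (_ : (k - a - b)%N = r); last lia.

rewrite (_ : (k.+2 - 2)%N = (a + b + r)%N); last lia.
rewrite (_ : (k.+2 - a.+1)%N = (b + r).+1); last lia.
rewrite (_ : (k.+2 - b.+1)%N = (a + r).+1); last lia.
rewrite (_ : (a.+1 + b.+1 == k.+2) = (r == 0%N)); last by apply/eqP/eqP; lia.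
case: r hr => [|r] hr /=.
  rewrite !addn0 !exprS !exprD !exprMn !expr0; ring.
rewrite !addnS !exprS !exprD !exprMn; ring.
Qed.
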